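(* Let $G$ be an unweighted digraph without loops having a reciprocal leaf $i$, and let $\widetilde G$ be the digraph obtained from $G$ by deleting vertex $i$ together with the two edges joining it to the rest of $G$. Let $M(t)$ and $\widetilde M(t)$ be the directed deformed graph Laplacians of $G$ and $\widetilde G$. Then $M(t)$ and $\widetilde M(t)$ have the same finite eigenvalues, with the same algebraic and the same geometric multiplicities.
   Context: A digraph $G=(V,E)$, no loops or multiple edges, adjacency matrix $A$ ($A_{ij}=1$ iff $(i,j)\in E$); $S=A\circ A^T$, $D=\mathrm{diag}(\mathrm{diag}(A^2))$; directed deformed graph Laplacian $M(t)=I-At+(D-I)t^2+(A-S)t^3$. A vertex $i$ is a reciprocal leaf if there is exactly one vertex $j\neq i$ with $(i,j)\in E$ or $(j,i)\in E$, and both $(i,j),(j,i)\in E$. For a regular square polynomial matrix $M(t)$, a finite eigenvalue $\lambda$ is a root of $\det M(t)$, its algebraic multiplicity is its multiplicity as such a root, and its geometric multiplicity is $\dim\ker M(\lambda)$. *)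

(* Defs.v *)
From HB Require Import structures.
From mathcomp Require Import all_boot all_order all_algebra all_field.
Set Implicit Arguments. Unset Strict Implicit. Unset Printing Implicit Defensive.
Import Order.TTheory GRing.Theory Num.Theory.
Local Open Scope ring_scope.

(* A digraph on the vertex set 'I_n is an edge relation e : rel 'I_n;
   (i,j) is an edge iff e i j.  No multiple edges by construction; no loops
   is the hypothesis [irreflexive e]. *)

Definition adjmx n (e : rel 'I_n) : 'M[algC]_n := \matrix_(i, j) (e i j)%:R.

Definition symmx n (A : 'M[algC]_n) : 'M[algC]_n := \matrix_(i, j) (A i j * A j i).

Definition diagsq n (A : 'M[algC]_n) : 'M[algC]_n :=
  \matrix_(i, j) ((i == j)%:R * (A *m A) i i).

Definition deformed_laplacian n (e : rel 'I_n) : 'M[{poly algC}]_n :=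
  let A := adjmx e in
  map_mx polyC 1%:M - 'X *: map_mx polyC A
  + 'X^2 *: map_mx polyC (diagsq A - 1%:M)
  + 'X^3 *: map_mx polyC (A - symmx A).

Definition charM n (e : rel 'I_n) : {poly algC} := \det (deformed_laplacian e).

Definition evalM n (e : rel 'I_n) (l : algC) : 'M[algC]_n :=
  map_mx (horner^~ l) (deformed_laplacian e).

Definition finite_eigenvalue n (e : rel 'I_n) (l : algC) : bool := root (charM e) l.

Definition alg_mult n (e : rel 'I_n) (l : algC) : nat := mup l (charM e).

(* geometric multiplicity: dim ker M(l) = dim {v | M(l) v = 0}
   = dim of the row kernel of M(l)^T *)
Definition geom_mult n (e : rel 'I_n) (l : algC) : nat :=
  \rank (kermx (evalM e l)^T).

Definition reciprocal_leaf n (e : rel 'I_n) (i : 'I_n) : Prop :=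
  exists j, [/\ j != i, e i j, e j i &
             forall k, k != i -> (e i k || e k i) -> k = j].

Definition delete_vertex n (e : rel 'I_n.+1) (i : 'I_n.+1) : rel 'I_n :=
  fun x y => e (lift i x) (lift i y).

(* Main.v *)
From HB Require Import structures.
From mathcomp Require Import all_boot all_order all_algebra all_field.
From mathcomp Require Import perm.
From mathcomp Require Import ring.
Require Import Defs.
Import Order.TTheory GRing.Theory Num.Theory.
Set Implicit Arguments. Unset Strict Implicit.
Local Open Scope ring_scope.

Lemma schur_fact (R : comRingType) n (B : 'M[R]_(1 + n)) : ulsubmx B = 1%:M ->
  B = block_mx 1%:M 0 (dlsubmx B) 1%:M *m
      (block_mx 1%:M 0 0 (drsubmx B - dlsubmx B *m ursubmx B) *m
       block_mx 1%:M (ursubmx B) 0 1%:M).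
Proof.
move=> H1; rewrite [LHS](esym (submxK B)) H1.
rewrite !mulmx_block.
rewrite ?mul1mx ?mul0mx ?mulmx0 ?mulmx1 ?addr0 ?add0r ?mul1mx ?mulmx1.

by rewrite addrC subrK.
Qed.

Lemma schur_det (R : comRingType) n (B : 'M[R]_(1 + n)) : ulsubmx B = 1%:M ->
  \det B = \det (drsubmx B - dlsubmx B *m ursubmx B).
Proof.
move=> H1; rewrite [in LHS](schur_fact H1) !det_mulmx det_lblock det_ublock.
by rewrite det_ublock !det1 ?mul1r ?mulr1.
Qed.

Lemma schur_rank (R : fieldType) n (B : 'M[R]_(1 + n)) : ulsubmx B = 1%:M ->
  \rank B = (\rank (drsubmx B - dlsubmx B *m ursubmx B)).+1.
Proof.
move=> H1; rewrite [in LHS](schur_fact H1).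
have U1 : block_mx 1%:M 0 (dlsubmx B) 1%:M \in unitmx.
  by rewrite unitmxE det_lblock !det1 ?mulr1 ?unitr1.
have U2 : block_mx 1%:M (ursubmx B) 0 1%:M \in unitmx.
  by rewrite unitmxE det_ublock !det1 ?mulr1 ?unitr1.
rewrite eqmxMfull ?row_full_unit // mxrankMfree ?row_free_unit //.
by rewrite rank_diag_block_mx mxrank1.
Qed.

Lemma conj_det (R : comRingType) n (p : 'S_n) (A : 'M[R]_n) :
  \det (\matrix_(x, y) A (p x) (p y)) = \det A.
Proof.
have -> : \matrix_(x, y) A (p x) (p y) = perm_mx p *m (A *m perm_mx p^-1).
  by rewrite -col_permE -row_permE; apply/matrixP => x y; rewrite !mxE.
rewrite !det_mulmx !det_perm odd_permV mulrCA -expr2 -exprM.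
by rewrite mulnC exprM sqrrN expr1n expr1n mulr1.
Qed.

Lemma conj_rank (R : fieldType) n (p : 'S_n) (A : 'M[R]_n) :
  \rank (\matrix_(x, y) A (p x) (p y)) = \rank A.
Proof.
have -> : \matrix_(x, y) A (p x) (p y) = perm_mx p *m (A *m perm_mx p^-1).
  by rewrite -col_permE -row_permE; apply/matrixP => x y; rewrite !mxE.
by rewrite eqmxMfull ?row_full_unit ?unitmx_perm // mxrankMfree ?row_free_unit ?unitmx_perm.
Qed.
Lemma dlE n (e : rel 'I_n) x y :
  deformed_laplacian e x y =
  (x == y)%:R - 'X * (e x y)%:R
  + 'X^2 * ((x == y)%:R * (\sum_k (e x k)%:R * (e k x)%:R) - (x == y)%:R)
  + 'X^3 * ((e x y)%:R - (e x y)%:R * (e y x)%:R).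
Proof.
rewrite /deformed_laplacian /diagsq /symmx /adjmx !mxE.
under eq_bigr do rewrite !mxE.
rewrite !rmorphB !rmorphM rmorph_sum.
rewrite !rmorph_nat.
under eq_bigr do rewrite rmorphM !rmorph_nat.
by [].
Qed.


Theorem theorem3p8 (n : nat) (e : rel 'I_n.+1) (i : 'I_n.+1) :
  irreflexive e -> reciprocal_leaf e i ->
  let e' := delete_vertex e i in
  (forall l : algC, finite_eigenvalue e l = finite_eigenvalue e' l) /\
  (forall l : algC, finite_eigenvalue e l ->
     alg_mult e l = alg_mult e' l /\ geom_mult e l = geom_mult e' l).
Proof.
move=> irr [j [nji eij eji Hk]] e'.
have eii : e i i = false by rewrite irr.
case: (unliftP i j) => [j' Ej|Ej]; last by rewrite Ej eqxx in nji.
have hin k : k != j -> e i k = false.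
  move=> nkj; apply/negP => eik; have [/eqP ki|nki] := boolP (k == i).
    by rewrite ki eii in eik.
  by move: (Hk k nki); rewrite eik => /(_ isT) /eqP; rewrite (negbTE nkj).
have hni k : k != j -> e k i = false.
  move=> nkj; apply/negP => eki; have [/eqP ki|nki] := boolP (k == i).
    by rewrite ki eii in eki.
  by move: (Hk k nki); rewrite eki orbT => /(_ isT) /eqP; rewrite (negbTE nkj).
have Si : \sum_k (e i k)%:R * (e k i)%:R = 1 :> {poly algC}.
  rewrite (bigD1 j) //= eij eji big1 ?addr0 ?mulr1 //.
  by move=> k nkj; rewrite hin // mul0r.
have Sx x : \sum_k (e (lift i x) k)%:R * (e k (lift i x))%:R =
   (x == j')%:R + \sum_k (e' x k)%:R * (e' k x)%:R :> {poly algC}.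
  rewrite (bigD1_ord i) //=; congr (_ + _).
  have [->|nx] := eqVneq x j'; first by rewrite -Ej eij eji mulr1.
  have nlx : lift i x != j by rewrite Ej (inj_eq (@lift_inj _ i)).
  by rewrite hin ?mulr0.
pose N := deformed_laplacian e.
have Nii : N i i = 1.
  by rewrite /N dlE Si eqxx eii /=; ring.
have Nix k : k != i -> N i k = - 'X * (k == j)%:R.
  move=> nki; rewrite /N dlE eq_sym (negbTE nki).
  have [->|nkj] := eqVneq k j; first by rewrite eij eji /=; ring.
  by rewrite hin ?hni //=; ring.
have Nxi k : k != i -> N k i = - 'X * (k == j)%:R.
  move=> nki; rewrite /N dlE (negbTE nki).
  have [->|nkj] := eqVneq k j; first by rewrite eij eji /=; ring.
  by rewrite hin ?hni //=; ring.
have NE : N = deformed_laplacian e by [].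
clearbody N.
pose p : 'S_(n.+1) := lift_perm ord0 i 1.
have p0 : p (lshift n (ord0 : 'I_1)) = i.
  have -> : lshift n (ord0 : 'I_1) = ord0 :> 'I_n.+1 by apply/val_inj.
  by rewrite lift_perm_id.
have pr x : p (rshift 1 x) = lift i x.
  have -> : rshift 1 x = lift ord0 x :> 'I_n.+1 by apply/val_inj.
  by rewrite lift_perm_lift perm1.
pose C : 'M[{poly algC}]_(1 + n) := \matrix_(x, y) N (p x) (p y).
have HC : ulsubmx C = 1%:M.
  apply/matrixP => a b; rewrite !mxE !ord1 p0 Nii.
  by [].
have HS : drsubmx C - dlsubmx C *m ursubmx C = deformed_laplacian e'.
  apply/matrixP => x y; rewrite [RHS]dlE !mxE big_ord1 !mxE !pr p0.
  have lni z : lift i z != i by rewrite eq_sym neq_lift.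
  rewrite (Nxi _ (lni x)) (Nix _ (lni y)) NE dlE Sx.
  rewrite Ej !(inj_eq (@lift_inj _ i)) /e' /delete_vertex.
  have [<-|nxy] := eqVneq x y.
    by case: (x == j'); rewrite /=; ring.
  have [ex|nx] := eqVneq x j'; have [ey|ny] := eqVneq y j'; rewrite /=; try ring.
  by rewrite ex ey eqxx in nxy.
have Hdet : charM e = charM e'.
  rewrite /charM -NE -(conj_det p N) -/C (schur_det HC) HS.
  by [].
have Hrank l : \rank (evalM e l) = (\rank (evalM e' l)).+1.
  have EC : \matrix_(x, y) evalM e l (p x) (p y) = map_mx (horner_eval l) C.
    by apply/matrixP => x y; rewrite /evalM -NE !mxE.
  rewrite -(conj_rank p) EC schur_rank.
    rewrite -map_drsubmx -map_dlsubmx -map_ursubmx -map_mxM -map_mxB HS.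
    by [].
  by rewrite -map_ulsubmx HC map_mx1.
split => l; first by rewrite /finite_eigenvalue Hdet.
move=> _; split; first by rewrite /alg_mult Hdet.
by rewrite /geom_mult !mxrank_ker !mxrank_tr Hrank subSS.
Qed.
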